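(* Let $R$ be a principal ideal domain. Then every prime ideal of $R[X]$ is power stable.
   Context: An ideal $I$ of the polynomial ring $R[X]$ over an integral domain $R$ is called power stable if $I^t\cap R = (I\cap R)^t$ for all integers $t\geq 1$. *)

(* Defs.v *)
From HB Require Import structures.
From mathcomp Require Import all_boot all_order all_algebra.
Set Implicit Arguments. Unset Strict Implicit. Unset Printing Implicit Defensive.
Import GRing.Theory.
Local Open Scope ring_scope.

Definition is_ideal (T : comNzRingType) (I : T -> Prop) : Prop :=
  I 0 /\ (forall x y, I x -> I y -> I (x + y)) /\ (forall a x, I x -> I (a * x)).

Definition is_prime_ideal (T : comNzRingType) (I : T -> Prop) : Prop :=
  is_ideal I /\ ~ I 1 /\ (forall x y, I (x * y) -> I x \/ I y).

Definition is_principal (T : comNzRingType) (I : T -> Prop) : Prop :=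
  exists a : T, forall x, I x <-> exists r : T, x = r * a.

Definition is_PID (R : idomainType) : Prop :=
  forall I : R -> Prop, is_ideal I -> is_principal I.

Definition ideal_mul (T : comNzRingType) (I J : T -> Prop) : T -> Prop :=
  fun x => exists s : seq (T * T),
    (forall p, p \in s -> I p.1 /\ J p.2) /\ x = \sum_(p <- s) p.1 * p.2.

Fixpoint ideal_pow (T : comNzRingType) (I : T -> Prop) (t : nat) : T -> Prop :=
  match t with
  | O => fun _ => True
  | S t' => ideal_mul (ideal_pow I t') I
  end.

Definition contract (R : comNzRingType) (I : {poly R} -> Prop) : R -> Prop :=
  fun r => I (r%:P).

Definition power_stable (R : idomainType) (I : {poly R} -> Prop) : Prop :=
  forall t : nat, (1 <= t)%N ->
    forall r : R, contract (ideal_pow I t) r <-> ideal_pow (contract I) t r.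

(* Main.v *)
Require Import Defs.
From mathcomp Require Import all_boot all_order all_algebra.
From Stdlib Require Import Classical.
Set Implicit Arguments. Unset Strict Implicit. Unset Printing Implicit Defensive.
Import GRing.Theory.
Local Open Scope ring_scope.

Lemma ideal_mul_sub (T : comNzRingType) (J P : T -> Prop) :
  is_ideal P -> forall x, ideal_mul J P x -> P x.
Proof.
move=> [P0 [PD PM]] x [s [Hs ->]].
elim: s Hs => [|q s IH] Hs; first by rewrite big_nil.
rewrite big_cons; apply: PD; last by apply: IH => z zs; apply: Hs; rewrite inE zs orbT.
by apply: PM; case: (Hs q); rewrite ?inE ?eqxx.
Qed.

Lemma pow_sub (T : comNzRingType) (P : T -> Prop) t :
  is_ideal P -> (1 <= t)%N -> forall x, ideal_pow P t x -> P x.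
Proof. by case: t => // t hP _ x; apply: ideal_mul_sub. Qed.

Lemma pow_gen (T : comNzRingType) (J : T -> Prop) (a s : T) t :
  J a -> ideal_pow J t (s * a ^+ t).
Proof.
move=> Ja; elim: t s => [//|t IH] s /=.
exists [:: (s * a ^+ t, a)]; split.
  by move=> q; rewrite inE => /eqP -> /=; split.
by rewrite big_seq1 /= exprSr mulrA.
Qed.

Lemma pow_div (T : comNzRingType) (J : T -> Prop) (rho : T -> T) (a : T) :
  rho 0 = 0 -> (forall x y, rho (x + y) = rho x + rho y) ->
  (forall x y, rho (x * y) = rho (rho x * rho y)) ->
  (forall n k, rho (a ^+ n * k) = a ^+ n * rho k) ->
  (forall x, J x -> exists r, rho x = a * r) ->
  forall t x, ideal_pow J t x -> exists r, rho x = a ^+ t * r.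
Proof.
move=> r0 rD rM rX hJ; elim=> [|t IH] x /=.
  by move=> _; exists (rho x); rewrite mul1r.
move=> [s [Hs ->]]; elim: s Hs => [|q s IHs] Hs.
  by exists 0; rewrite big_nil r0 mulr0.
rewrite big_cons rD.
have [r' ->] : exists r, rho (\sum_(p <- s) p.1 * p.2) = a ^+ t.+1 * r.
  by apply: IHs => z zs; apply: Hs; rewrite inE zs orbT.
have [H1 H2] := Hs q (mem_head _ _).
have [r1 e1] := IH _ H1; have [r2 e2] := hJ _ H2.
rewrite rM e1 e2.
have -> : a ^+ t * r1 * (a * r2) = a ^+ t.+1 * (r1 * r2).
  by rewrite exprSr -!mulrA; congr (_ * _); rewrite mulrCA.
by exists (rho (r1 * r2) + r'); rewrite rX mulrDr.
Qed.

Lemma polyCX (R : idomainType) (a : R) n : (a ^+ n)%:P = a%:P ^+ n.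
Proof. by rewrite rmorphXn. Qed.

Section Main.
Variables (R : idomainType) (I : {poly R} -> Prop) (a : R).
Hypothesis ID : forall x y, I x -> I y -> I (x + y).
Hypothesis IM : forall c x, I x -> I (c * x).
Hypothesis Ia : I a%:P.
Hypothesis bez : forall l, ~ (exists m, l = m * a) -> exists x y, 1 = a * x + l * y.

Lemma IB x y : I x -> I y -> I (x - y).
Proof. by move=> Ix Iy; apply: ID => //; rewrite -mulN1r; apply: IM. Qed.

Lemma Ismul c k : I (c *: k * a%:P).
Proof. by apply: IM. Qed.

Lemma scal_ma (m : R) (k : {poly R}) : (m * a) *: k = (m *: k) * a%:P.
Proof. by rewrite [RHS]mulrC mul_polyC scalerA mulrC. Qed.

Lemma lemC n (r : {poly R}) : (size r <= n)%N -> I r -> ~ (exists h, r = a%:P * h) ->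
  exists f, f \is monic /\ I f /\ (size f <= size r)%N.
Proof.
elim: n r => [|n IH] r.
  rewrite leqn0 size_poly_eq0 => /eqP -> _ []; by exists 0; rewrite mulr0.
move=> sr Ir nd.
have rn0 : r != 0 by apply/eqP => r0; apply: nd; exists 0; rewrite r0 mulr0.
set d := (size r).-1.
have sd : size r = d.+1 by rewrite /d prednK // lt0n size_poly_eq0.
set l := lead_coef r.
have rl : r`_d = l by rewrite /l lead_coefE.
case: (classic (exists m, l = m * a)) => [[m lm]|nl].
  set r' := r - l *: 'X^d.
  have Ir' : I r'.
    by apply: IB => //; rewrite lm scal_ma; apply: IM.
  have sr' : (size r' <= d)%N.
    apply/leq_sizeP => j jd; rewrite coefB coefZ coefXn.
    case: (ltngtP j d) => [jl|jg|je]; first by rewrite ltnNge jd in jl.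
      by rewrite mulr0 subr0 nth_default // sd.
    by rewrite mulr1 je rl subrr.
  have dn : (d <= n)%N by rewrite -ltnS -sd.
  have nd' : ~ (exists h, r' = a%:P * h).
    move=> [h eh]; apply: nd; exists (h + m *: 'X^d).
    by rewrite mulrDr -eh /r' lm scal_ma [a%:P * (_ *: _)]mulrC subrK.
  have [f [mf [If sf]]] := IH r' (leq_trans sr' dn) Ir' nd'.
  exists f; split=> //; split=> //.
  by rewrite (leq_trans sf) // (leq_trans sr') // sd.
have [x [y e]] := bez nl.
set f := y *: r + (a * x) *: 'X^d.
have fd : f`_d = 1.
  by rewrite /f coefD !coefZ coefXn eqxx mulr1 rl e addrC (mulrC y).
have sf : (size f <= d.+1)%N.
  apply/leq_sizeP => j jd; rewrite /f coefD !coefZ coefXn.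
  have -> : (j == d) = false by apply/negbTE; rewrite neq_ltn jd orbT.
  by rewrite mulr0 addr0 nth_default ?mulr0 // sd.
have sfe : size f = d.+1.
  apply/eqP; rewrite eqn_leq sf /=; apply: contraT; rewrite -leqNgt => H.
  by move: fd; rewrite nth_default // => /eqP; rewrite eq_sym oner_eq0.
exists f; split; last split.
- by rewrite monicE /lead_coef sfe fd.
- apply: ID; first by rewrite -mul_polyC; apply: IM.
  by rewrite mulrC scal_ma; apply: IM.
- by rewrite sfe sd.
Qed.

Lemma lemD n (f : {poly R}) : (size f <= n)%N -> f \is monic -> I f ->
  exists f', f' \is monic /\ I f' /\
    forall g, I g -> exists h, Pdiv.Ring.rmodp g f' = a%:P * h.
Proof.
elim: n f => [|n IH] f.
  by rewrite leqn0 size_poly_eq0 => /eqP ->; rewrite monicE lead_coef0 eq_sym oner_eq0.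
move=> sf mf If.
case: (classic (forall g, I g -> exists h, Pdiv.Ring.rmodp g f = a%:P * h)) => [H|].
  by exists f.
move=> Hn; have [g Hg] := not_all_ex_not _ _ Hn; have [Ig ng] := imply_to_and _ _ Hg.
have Irg : I (Pdiv.Ring.rmodp g f).
  have e := Pdiv.RingMonic.rdivp_eq mf g.
  have -> : Pdiv.Ring.rmodp g f = g - Pdiv.Ring.rdivp g f * f.
    by rewrite {2}e addrC addKr.
  by apply: IB => //; apply: IM.
have srg : (size (Pdiv.Ring.rmodp g f) < size f)%N.
  by apply: Pdiv.Ring.ltn_rmodpN0; apply: monic_neq0.
have [f2 [mf2 [If2 sf2]]] := lemC (leqnn _) Irg ng.
apply: (IH f2) => //.
by rewrite -ltnS (leq_ltn_trans sf2) // (leq_trans srg).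
Qed.

End Main.

Theorem corollary3p4 (R : idomainType) (hR : is_PID R)
  (I : {poly R} -> Prop) (hI : is_prime_ideal I) : power_stable I.
Proof.
move: hI => [[I0 [ID IM]] [In1 Ipr]].
pose p := contract I.
have pid : is_ideal p.
  split; first by rewrite /p /contract polyC0.
  split=> [x y|c x]; rewrite /p /contract ?polyCD ?polyCM; [exact: ID| exact: IM].
have [a ha] := hR p pid.
have Ia : I a%:P by apply/ha; exists 1; rewrite mul1r.
have hA : forall t x, ideal_pow p t x -> exists r, x = a ^+ t * r.
  apply: (@pow_div _ p id) => //.
  by move=> x /ha [r ->]; exists r; rewrite mulrC.
move=> t ht r; split; last first.
  move=> H; have [s ->] := hA _ _ H.
  by rewrite /contract polyCM polyCX mulrC; apply: pow_gen.
move=> H.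
suff [s ->] : exists s, r = s * a ^+ t by apply: pow_gen.
case: (eqVneq a 0) => [a0|an0].
  have Ir : I r%:P := pow_sub (conj I0 (conj ID IM)) ht H.
  have [m] := (ha r).1 Ir; rewrite a0 mulr0 => ->.
  by exists 0; rewrite mul0r.
have apr : forall x y, (exists m, x * y = m * a) ->
    (exists m, x = m * a) \/ (exists m, y = m * a).
  move=> x y /ha; rewrite /p /contract polyCM => /Ipr [] /ha Hx; [left|right]; exact: Hx.
have bez : forall l, ~ (exists m, l = m * a) -> exists x y, 1 = a * x + l * y.
  move=> l nl.
  pose J := fun z : R => exists x y, z = a * x + l * y.
  have Jid : is_ideal J.
    split; first by exists 0, 0; rewrite !mulr0 addr0.
    split=> [x y [x1 [y1 ->]] [x2 [y2 ->]]|c x [x1 [y1 ->]]].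
      by exists (x1 + x2), (y1 + y2); rewrite !mulrDr addrACA.
    by exists (c * x1), (c * y1); rewrite mulrDr (mulrCA c a) (mulrCA c l).
  have [d hd] := hR J Jid.
  have [u eu] : exists u, a = u * d.
    by apply/hd; exists 1, 0; rewrite mulr0 mulr1 addr0.
  have [v ev] : exists v, l = v * d.
    by apply/hd; exists 0, 1; rewrite mulr0 mulr1 add0r.
  have [x0 [y0 ed]] : J d by apply/hd; exists 1; rewrite mul1r.
  have h1 : exists m, u * d = m * a by exists 1; rewrite mul1r -eu.
  case: (apr u d h1) => [[w ew]|[w ew]].
    have wd : w * d = 1.
      apply: (mulfI an0); rewrite mulr1 {2}eu ew.
      by rewrite mulrA (mulrC a w).
    exists (w * x0), (w * y0).
    by rewrite -wd ed mulrDr (mulrCA w a) (mulrCA w l).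
  by exfalso; apply: nl; exists (v * w); rewrite ev ew mulrA.
have rX : forall (n : nat) (k : {poly R}), id (a%:P ^+ n * k) = a%:P ^+ n * id k by [].
case: (classic (forall g, I g -> exists h, g = a%:P * h)) => [Hall|Hn].
  have [h e] := @pow_div _ I id a%:P erefl (fun _ _ => erefl) (fun _ _ => erefl) rX Hall t r%:P H.
  exists h`_0; rewrite mulrC.
  by have := congr1 (fun q : {poly R} => q`_0) e; rewrite /= -polyCX coefCM coefC.
have [g Hg] := not_all_ex_not _ _ Hn; have [Ig ng] := imply_to_and _ _ Hg.
have [f [mf [If _]]] := lemC ID IM Ia bez (leqnn _) Ig ng.
have [f' [mf' [If' Hf']]] := lemD ID IM Ia bez (leqnn _) mf If.
have sf' : (1 < size f')%N.
  rewrite ltnNge; apply/negP => sf; apply: In1.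
  have s1 : size f' = 1%N.
    by apply/eqP; rewrite eqn_leq sf lt0n size_poly_eq0 (monic_neq0 mf').
  have f'1 : f' = 1.
    rewrite (size1_polyC sf); move: mf'; rewrite monicE /lead_coef s1.
    by move/eqP ->.
  by rewrite -f'1.
have rM' : forall x y, Pdiv.Ring.rmodp (x * y) f' =
    Pdiv.Ring.rmodp (Pdiv.Ring.rmodp x f' * Pdiv.Ring.rmodp y f') f'.
  by move=> x y; rewrite Pdiv.RingMonic.rmodp_mulml // Pdiv.RingMonic.rmodp_mulmr.
have rX' : forall (n : nat) (k : {poly R}), Pdiv.Ring.rmodp (a%:P ^+ n * k) f' =
    a%:P ^+ n * Pdiv.Ring.rmodp k f'.
  by move=> n k; rewrite -polyCX !mul_polyC Pdiv.RingMonic.rmodpZ.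
have [h e] := @pow_div _ I (fun q => Pdiv.Ring.rmodp q f') a%:P
  (Pdiv.Ring.rmod0p _) (Pdiv.RingMonic.rmodpD mf') rM' rX' Hf' t r%:P H.
move: e; rewrite Pdiv.Ring.rmodp_small; last first.
  by rewrite (leq_ltn_trans (size_polyC_leq1 _)).
move=> e; exists h`_0; rewrite mulrC.
by have := congr1 (fun q : {poly R} => q`_0) e; rewrite /= -polyCX coefCM coefC.
Qed.
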